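(* Let $p,q$ be coprime integers and let $G(p,q)=\langle a,b\mid a^2ba^2b^2a^{-1}b^2,\ m^pl^q\rangle$, where $m=a^{-1}b^{-2}$ and $l=ab^{-1}a^2m^{-18}$. Let $k\in G(p,q)$ be an element with $m=k^q$ and $l=k^{-p}$. Suppose $G(p,q)$ acts on the right on a partially ordered set $(P,\le)$, $x\mapsto x g$, preserving the order. If some $x\in P$ satisfies either (1) $xk=x$ and $x$, $xa$ are comparable in $P$, or (2) $xa=x$ and $x$, $xk$ are comparable in $P$, then $xg=x$ for every $g\in G(p,q)$.
   Context: $G(p,q)$ is the fundamental group of $p/q$-Dehn surgery on the $(-2,3,7)$-pretzel knot, with $m$, $l$ the meridian and longitude. An element $k$ with $m=k^q$, $l=k^{-p}$ exists in $G(p,q)$. In the relations one has $k^{p-18q}=a^{-2}ba^{-1}$. *)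

(* Defs.v *)
From Stdlib Require Import ZArith.
Open Scope Z_scope.

Record IsGroup (G : Type) (mul : G -> G -> G) (inv : G -> G) (one : G) : Prop := {
  grp_assoc : forall x y z, mul x (mul y z) = mul (mul x y) z;
  grp_mul1g : forall x, mul one x = x;
  grp_mulg1 : forall x, mul x one = x;
  grp_mulVg : forall x, mul (inv x) x = one;
  grp_mulgV : forall x, mul x (inv x) = one
}.

Fixpoint npow {G : Type} (mul : G -> G -> G) (one : G) (x : G) (n : nat) : G :=
  match n with
  | O => one
  | S n' => mul x (npow mul one x n')
  end.

Definition zpow {G : Type} (mul : G -> G -> G) (inv : G -> G) (one : G)
  (x : G) (z : Z) : G :=
  if (0 <=? z) then npow mul one x (Z.to_nat z)
  else inv (npow mul one x (Z.to_nat (- z))).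

Inductive generated {G : Type} (mul : G -> G -> G) (inv : G -> G) (one : G)
  (a b : G) : G -> Prop :=
  | gen_one : generated mul inv one a b one
  | gen_a  : forall g, generated mul inv one a b g -> generated mul inv one a b (mul g a)
  | gen_ai : forall g, generated mul inv one a b g -> generated mul inv one a b (mul g (inv a))
  | gen_b  : forall g, generated mul inv one a b g -> generated mul inv one a b (mul g b)
  | gen_bi : forall g, generated mul inv one a b g -> generated mul inv one a b (mul g (inv b)).

Record IsPartialOrder (P : Type) (le : P -> P -> Prop) : Prop := {
  po_refl : forall x, le x x;
  po_antisym : forall x y, le x y -> le y x -> x = y;
  po_trans : forall x y z, le x y -> le y z -> le x z
}.

Record IsOrderRightAction (G : Type) (mul : G -> G -> G) (one : G)
  (P : Type) (le : P -> P -> Prop) (act : P -> G -> P) : Prop := {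
  act_one : forall x, act x one = x;
  act_mul : forall x g h, act (act x g) h = act x (mul g h);
  act_le : forall x y g, le x y -> le (act x g) (act y g)
}.

Definition comparable {P : Type} (le : P -> P -> Prop) (x y : P) : Prop :=
  le x y \/ le y x.

(* Main.v *)
Require Import Defs.
From Stdlib Require Import ZArith Znumtheory Lia.
Open Scope Z_scope.

Lemma g_inv_uniq {G : Type} {mul : G -> G -> G} {inv : G -> G} {one : G}
  (HG : IsGroup G mul inv one) x y : mul x y = one -> y = inv x.
Proof.
  intro H. rewrite <- (grp_mul1g _ _ _ _ HG y), <- (grp_mulVg _ _ _ _ HG x),
    <- (grp_assoc _ _ _ _ HG), H. apply (grp_mulg1 _ _ _ _ HG).
Qed.

Lemma g_inv_mul {G : Type} {mul : G -> G -> G} {inv : G -> G} {one : G}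
  (HG : IsGroup G mul inv one) x y : inv (mul x y) = mul (inv y) (inv x).
Proof.
  destruct HG as [A M1 M1' MV MV'].
  symmetry. apply (g_inv_uniq (Build_IsGroup _ _ _ _ A M1 M1' MV MV')).
  rewrite A, <- (A x y), MV', M1', MV'. reflexivity.
Qed.

Lemma g_inv_inv {G : Type} {mul : G -> G -> G} {inv : G -> G} {one : G}
  (HG : IsGroup G mul inv one) x : inv (inv x) = x.
Proof. symmetry. apply (g_inv_uniq HG). apply (grp_mulVg _ _ _ _ HG). Qed.

Lemma g_inv_one {G : Type} {mul : G -> G -> G} {inv : G -> G} {one : G}
  (HG : IsGroup G mul inv one) : inv one = one.
Proof. symmetry. apply (g_inv_uniq HG). apply (grp_mulg1 _ _ _ _ HG). Qed.

Lemma npow_succ_r {G : Type} {mul : G -> G -> G} {inv : G -> G} {one : G}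
  (HG : IsGroup G mul inv one) x n : npow mul one x (S n) = mul (npow mul one x n) x.
Proof.
  induction n as [|n IH]; simpl.
  - rewrite (grp_mulg1 _ _ _ _ HG), (grp_mul1g _ _ _ _ HG). reflexivity.
  - simpl in IH. rewrite <- (grp_assoc _ _ _ _ HG), <- IH. reflexivity.
Qed.

Lemma zpow_nat {G : Type} {mul : G -> G -> G} {inv : G -> G} {one : G}
  x n : zpow mul inv one x (Z.of_nat n) = npow mul one x n.
Proof.
  unfold zpow. replace (0 <=? Z.of_nat n) with true by (symmetry; apply Z.leb_le; lia).
  rewrite Nat2Z.id. reflexivity.
Qed.

Lemma zpow_negnat {G : Type} {mul : G -> G -> G} {inv : G -> G} {one : G}
  x n : zpow mul inv one x (- Z.of_nat (S n)) = inv (npow mul one x (S n)).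
Proof.
  unfold zpow. replace (0 <=? - Z.of_nat (S n)) with false by (symmetry; apply Z.leb_gt; lia).
  rewrite Z.opp_involutive, Nat2Z.id. reflexivity.
Qed.

Lemma z_cases z : (exists n, z = Z.of_nat n) \/ (exists n, z = - Z.of_nat (S n)).
Proof.
  destruct (Z.le_gt_cases 0 z).
  - left. exists (Z.to_nat z). lia.
  - right. exists (Z.to_nat (- z - 1)). lia.
Qed.

Lemma zpow_succ {G : Type} {mul : G -> G -> G} {inv : G -> G} {one : G}
  (HG : IsGroup G mul inv one) x z :
  zpow mul inv one x (Z.succ z) = mul (zpow mul inv one x z) x.
Proof.
  destruct (z_cases z) as [[n ->]|[n ->]].
  - replace (Z.succ (Z.of_nat n)) with (Z.of_nat (S n)) by lia.
    rewrite !zpow_nat. apply (npow_succ_r HG).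
  - rewrite zpow_negnat. destruct n as [|n].
    + replace (Z.succ (- Z.of_nat 1)) with (Z.of_nat 0) by lia.
      rewrite zpow_nat. simpl. rewrite (grp_mulg1 _ _ _ _ HG), (grp_mulVg _ _ _ _ HG). reflexivity.
    + replace (Z.succ (- Z.of_nat (S (S n)))) with (- Z.of_nat (S n)) by lia.
      rewrite zpow_negnat. change (npow mul one x (S (S n))) with (mul x (npow mul one x (S n))).
      rewrite (g_inv_mul HG), <- (grp_assoc _ _ _ _ HG), (grp_mulVg _ _ _ _ HG), (grp_mulg1 _ _ _ _ HG).
      reflexivity.
Qed.

Lemma zpow_pred {G : Type} {mul : G -> G -> G} {inv : G -> G} {one : G}
  (HG : IsGroup G mul inv one) x z :
  zpow mul inv one x (Z.pred z) = mul (zpow mul inv one x z) (inv x).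
Proof.
  rewrite <- (Z.succ_pred z) at 2. rewrite (zpow_succ HG), <- (grp_assoc _ _ _ _ HG),
    (grp_mulgV _ _ _ _ HG), (grp_mulg1 _ _ _ _ HG). reflexivity.
Qed.

Lemma zpow_add {G : Type} {mul : G -> G -> G} {inv : G -> G} {one : G}
  (HG : IsGroup G mul inv one) x m n :
  zpow mul inv one x (m + n) = mul (zpow mul inv one x m) (zpow mul inv one x n).
Proof.
  induction n using Z.peano_ind.
  - rewrite Z.add_0_r. change (zpow mul inv one x 0) with one. rewrite (grp_mulg1 _ _ _ _ HG). reflexivity.
  - rewrite Z.add_succ_r, !(zpow_succ HG), IHn, (grp_assoc _ _ _ _ HG). reflexivity.
  - rewrite Z.add_pred_r, !(zpow_pred HG), IHn, (grp_assoc _ _ _ _ HG). reflexivity.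
Qed.

Lemma zpow_opp {G : Type} {mul : G -> G -> G} {inv : G -> G} {one : G}
  (HG : IsGroup G mul inv one) x z :
  zpow mul inv one x (- z) = inv (zpow mul inv one x z).
Proof.
  apply (g_inv_uniq HG). rewrite <- (zpow_add HG), Z.add_opp_diag_r. reflexivity.
Qed.

Lemma zpow_mul {G : Type} {mul : G -> G -> G} {inv : G -> G} {one : G}
  (HG : IsGroup G mul inv one) x z n :
  zpow mul inv one (zpow mul inv one x z) n = zpow mul inv one x (z * n).
Proof.
  induction n using Z.peano_ind.
  - rewrite Z.mul_0_r. reflexivity.
  - rewrite (zpow_succ HG), IHn, <- (zpow_add HG). f_equal. lia.
  - rewrite (zpow_pred HG), IHn, <- (zpow_opp HG), <- (zpow_add HG). f_equal. lia.
Qed.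

Lemma act_fix_inv {G : Type} {mul : G -> G -> G} {inv : G -> G} {one : G}
  (HG : IsGroup G mul inv one) {P : Type} {le : P -> P -> Prop} {act : P -> G -> P}
  (Hact : IsOrderRightAction G mul one P le act) x g :
  act x g = x -> act x (inv g) = x.
Proof.
  intro H. rewrite <- H at 1. rewrite (act_mul _ _ _ _ _ _ Hact), (grp_mulgV _ _ _ _ HG).
  apply (act_one _ _ _ _ _ _ Hact).
Qed.

Lemma act_cancel {G : Type} {mul : G -> G -> G} {inv : G -> G} {one : G}
  (HG : IsGroup G mul inv one) {P : Type} {le : P -> P -> Prop} {act : P -> G -> P}
  (Hact : IsOrderRightAction G mul one P le act) u v g :
  act u g = act v g -> u = v.
Proof.
  intro H. rewrite <- (act_one _ _ _ _ _ _ Hact u), <- (act_one _ _ _ _ _ _ Hact v),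
    <- (grp_mulgV _ _ _ _ HG g), <- !(act_mul _ _ _ _ _ _ Hact), H. reflexivity.
Qed.

Lemma act_fix_zpow {G : Type} {mul : G -> G -> G} {inv : G -> G} {one : G}
  (HG : IsGroup G mul inv one) {P : Type} {le : P -> P -> Prop} {act : P -> G -> P}
  (Hact : IsOrderRightAction G mul one P le act) x g :
  act x g = x -> forall n, act x (zpow mul inv one g n) = x.
Proof.
  intros H n. induction n using Z.peano_ind.
  - apply (act_one _ _ _ _ _ _ Hact).
  - rewrite (zpow_succ HG), <- (act_mul _ _ _ _ _ _ Hact), IHn. exact H.
  - rewrite (zpow_pred HG), <- (act_mul _ _ _ _ _ _ Hact), IHn. exact (act_fix_inv HG Hact x g H).
Qed.

Lemma act_fix_bezout {G : Type} {mul : G -> G -> G} {inv : G -> G} {one : G}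
  (HG : IsGroup G mul inv one) {P : Type} {le : P -> P -> Prop} {act : P -> G -> P}
  (Hact : IsOrderRightAction G mul one P le act) x k r q :
  Z.gcd r q = 1 -> act x (zpow mul inv one k r) = x -> act x (zpow mul inv one k q) = x ->
  act x k = x.
Proof.
  intros Hg Hr Hq.
  destruct (Zis_gcd_bezout _ _ _ (Zgcd_is_gcd r q)) as [u v Huv].
  rewrite Hg in Huv.
  assert (E : k = zpow mul inv one k (r * u + q * v)).
  { replace (r * u + q * v) with 1 by lia. unfold zpow. simpl.
    rewrite (grp_mulg1 _ _ _ _ HG). reflexivity. }
  rewrite E, (zpow_add HG), <- !(zpow_mul HG), <- (act_mul _ _ _ _ _ _ Hact).
  rewrite (act_fix_zpow HG Hact x _ Hr), (act_fix_zpow HG Hact x _ Hq). reflexivity.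
Qed.

Lemma act_core {G : Type} {mul : G -> G -> G} {inv : G -> G} {one : G}
  (HG : IsGroup G mul inv one) {P : Type} {le : P -> P -> Prop} {act : P -> G -> P}
  (HP : IsPartialOrder P le)
  (Hact : IsOrderRightAction G mul one P le act) x g1 g2 g3 h1 h2 :
  act x h1 = x -> act x h2 = x ->
  le x (act x g1) -> le x (act x g2) -> le x (act x g3) ->
  act (act (act (act (act x g1) h1) g2) h2) g3 = x ->
  act x g1 = x /\ act x g3 = x.
Proof.
  intros F1 F2 L1 L2 L3 R.
  pose proof (act_le _ _ _ _ _ _ Hact) as AL.
  pose proof (AL _ _ h1 L1) as L1'. rewrite F1 in L1'.
  pose proof (AL _ _ g2 L1') as L1''.
  pose proof (AL _ _ h2 L1'') as L1'''.
  pose proof (AL _ _ g3 L1''') as L4. rewrite R in L4.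
  pose proof (AL _ _ h2 L2) as M. rewrite F2 in M.
  pose proof (AL _ _ g3 M) as M'.
  assert (E3 : act x g3 = x).
  { apply (po_antisym _ _ HP); [|exact L3].
    apply (po_trans _ _ HP _ _ _ M'). exact L4. }
  assert (Ez : act (act (act x g2) h2) g3 = x).
  { apply (po_antisym _ _ HP); [exact L4|]. apply (po_trans _ _ HP _ _ _ L3). exact M'. }
  split; [|exact E3].
  assert (Ez2 : act (act x g2) h2 = x).
  { apply (act_cancel HG Hact _ _ g3). rewrite Ez, E3. reflexivity. }
  assert (Ez3 : act x g2 = x).
  { apply (act_cancel HG Hact _ _ h2). rewrite Ez2, F2. reflexivity. }
  assert (R2 : act (act (act (act x g1) h1) g2) h2 = x).
  { apply (act_cancel HG Hact _ _ g3). rewrite R, E3. reflexivity. }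
  assert (R3 : act (act (act x g1) h1) g2 = x).
  { apply (act_cancel HG Hact _ _ h2). rewrite R2, F2. reflexivity. }
  assert (R4 : act (act x g1) h1 = x).
  { apply (act_cancel HG Hact _ _ g2). rewrite R3, Ez3. reflexivity. }
  apply (act_cancel HG Hact _ _ h1). rewrite R4, F1. reflexivity.
Qed.

Lemma g_c1 {G : Type} {mul : G -> G -> G} {inv : G -> G} {one : G}
  (HG : IsGroup G mul inv one) u x : mul (mul u x) (inv x) = u.
Proof. rewrite <- (grp_assoc _ _ _ _ HG), (grp_mulgV _ _ _ _ HG), (grp_mulg1 _ _ _ _ HG). reflexivity. Qed.
Lemma g_c2 {G : Type} {mul : G -> G -> G} {inv : G -> G} {one : G}
  (HG : IsGroup G mul inv one) u x : mul (mul u (inv x)) x = u.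
Proof. rewrite <- (grp_assoc _ _ _ _ HG), (grp_mulVg _ _ _ _ HG), (grp_mulg1 _ _ _ _ HG). reflexivity. Qed.

Lemma flip_po {P : Type} (le : P -> P -> Prop) : IsPartialOrder P le -> IsPartialOrder P (fun u v => le v u).
Proof. intros [R A T]. constructor; eauto. Qed.

Lemma flip_act {G : Type} {mul : G -> G -> G} {one : G} {P : Type} {le : P -> P -> Prop} {act : P -> G -> P} :
  IsOrderRightAction G mul one P le act -> IsOrderRightAction G mul one P (fun u v => le v u) act.
Proof. intros [A B C]. constructor; auto. Qed.

Lemma act_mono_pow {G : Type} {mul : G -> G -> G} {inv : G -> G} {one : G}
  (HG : IsGroup G mul inv one) {P : Type} {le : P -> P -> Prop} {act : P -> G -> P}
  (HP : IsPartialOrder P le)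
  (Hact : IsOrderRightAction G mul one P le act) x k :
  le x (act x k) ->
  (forall n, 0 <= n -> le x (act x (zpow mul inv one k n))) /\
  (forall n, n <= 0 -> le (act x (zpow mul inv one k n)) x).
Proof.
  intro H.
  assert (N : forall j, le x (act x (npow mul one k j))).
  { induction j as [|j IH].
    - simpl. rewrite (act_one _ _ _ _ _ _ Hact). apply (po_refl _ _ HP).
    - rewrite (npow_succ_r HG), <- (act_mul _ _ _ _ _ _ Hact).
      apply (po_trans _ _ HP _ _ _ H). apply (act_le _ _ _ _ _ _ Hact). exact IH. }
  assert (Z1 : forall n, 0 <= n -> le x (act x (zpow mul inv one k n))).
  { intros n Hn. replace n with (Z.of_nat (Z.to_nat n)) by lia. rewrite zpow_nat. apply N. }
  split; [exact Z1|].
  intros n Hn. replace n with (- (- n)) by lia. rewrite (zpow_opp HG).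
  pose proof (act_le _ _ _ _ _ _ Hact _ _ (inv (zpow mul inv one k (- n))) (Z1 (- n) ltac:(lia))) as L.
  rewrite (act_mul _ _ _ _ _ _ Hact _ (zpow mul inv one k (- n))), (grp_mulgV _ _ _ _ HG),
    (act_one _ _ _ _ _ _ Hact) in L. exact L.
Qed.

Lemma case2 {G : Type} {mul : G -> G -> G} {inv : G -> G} {one : G}
  (HG : IsGroup G mul inv one) {P : Type} {le : P -> P -> Prop} {act : P -> G -> P}
  (HP : IsPartialOrder P le)
  (Hact : IsOrderRightAction G mul one P le act) x a k r q :
  act x a = x -> le x (act x k) ->
  act (act (act (act (act x (zpow mul inv one k r)) (mul a (mul a a))) (zpow mul inv one k r))
     (mul a a)) (zpow mul inv one k q) = x ->
  act (act (act (act (act x (zpow mul inv one k r)) (mul a (mul a a))) (zpow mul inv one k (- q)))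
     (mul (inv a) (inv a))) (zpow mul inv one k (- q)) = x ->
  act x (zpow mul inv one k r) = x /\ act x (zpow mul inv one k q) = x.
Proof.
  intros Ha Hk Ri Rii.
  assert (A3 : act x (mul a (mul a a)) = x).
  { rewrite <- !(act_mul _ _ _ _ _ _ Hact), !Ha. reflexivity. }
  assert (A2 : act x (mul a a) = x).
  { rewrite <- !(act_mul _ _ _ _ _ _ Hact), !Ha. reflexivity. }
  assert (Ai : act x (inv a) = x) by exact (act_fix_inv HG Hact _ _ Ha).
  assert (Ai2 : act x (mul (inv a) (inv a)) = x).
  { rewrite <- !(act_mul _ _ _ _ _ _ Hact), !Ai. reflexivity. }
  assert (Fq : act x (zpow mul inv one k (- q)) = x -> act x (zpow mul inv one k q) = x).
  { intro H. rewrite <- (Z.opp_involutive q), (zpow_opp HG). apply (act_fix_inv HG Hact). exact H. }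
  destruct (act_mono_pow HG HP Hact x k Hk) as [Pos Neg].
  pose proof (flip_po le HP) as HP'. pose proof (flip_act Hact) as Hact'.
  destruct (Z.le_ge_cases 0 r) as [Hr|Hr]; destruct (Z.le_ge_cases 0 q) as [Hq|Hq].
  - exact (act_core HG HP Hact x _ _ _ _ _ A3 A2 (Pos _ Hr) (Pos _ Hr) (Pos _ Hq) Ri).
  - destruct (act_core HG HP Hact x _ _ _ _ _ A3 Ai2 (Pos _ Hr) (Pos (-q) ltac:(lia)) (Pos (-q) ltac:(lia)) Rii).
    auto.
  - destruct (act_core HG HP' Hact' x _ _ _ _ _ A3 Ai2 (Neg _ Hr) (Neg (-q) ltac:(lia)) (Neg (-q) ltac:(lia)) Rii).
    auto.
  - exact (act_core HG HP' Hact' x _ _ _ _ _ A3 A2 (Neg _ Hr) (Neg _ Hr) (Neg _ Hq) Ri).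
Qed.

Theorem mainTheorem7
  (p q : Z) (Hpq : Z.gcd p q = 1)
  (G : Type) (mul : G -> G -> G) (inv : G -> G) (one : G)
  (HG : IsGroup G mul inv one)
  (a b : G)
  (Hgen : forall g : G, generated mul inv one a b g)
  (Hrel : mul (mul (mul (mul (mul (mul (mul (mul a a) b) a) a) b) b) (inv a))
              (mul b b) = one)
  (Hsurg : let m := mul (inv a) (inv (mul b b)) in
           let l := mul (mul (mul a (inv b)) (mul a a)) (zpow mul inv one m (-18)) in
           mul (zpow mul inv one m p) (zpow mul inv one l q) = one)
  (k : G)
  (Hkm : zpow mul inv one k q = mul (inv a) (inv (mul b b)))
  (Hkl : zpow mul inv one k (- p) =
         mul (mul (mul a (inv b)) (mul a a))
             (zpow mul inv one (mul (inv a) (inv (mul b b))) (-18)))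
  (P : Type) (le : P -> P -> Prop) (HP : IsPartialOrder P le)
  (act : P -> G -> P) (Hact : IsOrderRightAction G mul one P le act)
  (x : P)
  (Hx : (act x k = x /\ comparable le x (act x a)) \/
        (act x a = x /\ comparable le x (act x k))) :
  forall g : G, act x g = x.
Proof.
  clear Hsurg.
  set (r := p - 18 * q).
  pose proof (grp_assoc _ _ _ _ HG) as GA.
  pose proof (act_mul _ _ _ _ _ _ Hact) as AM.
  pose proof (act_one _ _ _ _ _ _ Hact) as A1.
  assert (F2 : mul b b = mul (zpow mul inv one k (- q)) (inv a)).
  { rewrite (zpow_opp HG), Hkm, (g_inv_mul HG), !(g_inv_inv HG), (g_c1 HG). reflexivity. }
  assert (F1 : b = mul (mul (mul a a) (zpow mul inv one k r)) a).
  { set (W := mul (mul a (inv b)) (mul a a)) in *.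
    rewrite <- Hkm, (zpow_mul HG) in Hkl.
    assert (EW : W = zpow mul inv one k (- r)).
    { replace (- r) with (- p + - (q * -18)) by (unfold r; lia).
      rewrite (zpow_add HG), (zpow_opp HG _ (q * -18)), Hkl, (g_c1 HG). reflexivity. }
    assert (EW' : zpow mul inv one k r = inv W).
    { rewrite EW, (zpow_opp HG), (g_inv_inv HG). reflexivity. }
    rewrite EW'. unfold W. rewrite !(g_inv_mul HG), !(g_inv_inv HG), !GA, (g_c2 HG), (g_c1 HG),
      (grp_mulgV _ _ _ _ HG), (grp_mul1g _ _ _ _ HG). reflexivity. }
  assert (Hb : forall y, act y b = act (act (act (act y a) a) (zpow mul inv one k r)) a).
  { intro y. rewrite F1 at 1. rewrite <- !AM. reflexivity. }
  assert (Hbb : forall y, act (act y b) b = act (act y (zpow mul inv one k (- q))) (inv a)).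
  { intro y. rewrite !AM, F2. reflexivity. }
  assert (Hqq : forall y, act (act y (zpow mul inv one k (- q))) (zpow mul inv one k q) = y).
  { intro y. rewrite AM, <- (zpow_add HG), Z.add_opp_diag_l. apply A1. }
  assert (Hrel' : forall y, act (act (act (act (act (act (act (act (act (act y a) a) b) a) a) b) b) (inv a)) b) b = y).
  { intro y. rewrite <- (A1 y) at 2. rewrite <- Hrel, <- !AM. reflexivity. }
  assert (Hia : forall y, act (act y (inv a)) a = y).
  { intro y. rewrite AM, (grp_mulVg _ _ _ _ HG). apply A1. }
  assert (Fin : act x a = x -> act x k = x -> forall g, act x g = x).
  { intros Ha Hk. assert (Hbx : act x b = x).
    { rewrite Hb, Ha, Ha, (act_fix_zpow HG Hact _ _ Hk), Ha. reflexivity. }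
    intro g. induction (Hgen g) as [|g _ IH|g _ IH|g _ IH|g _ IH].
    - apply A1.
    - rewrite <- AM, IH. exact Ha.
    - rewrite <- AM, IH. exact (act_fix_inv HG Hact _ _ Ha).
    - rewrite <- AM, IH. exact Hbx.
    - rewrite <- AM, IH. exact (act_fix_inv HG Hact _ _ Hbx). }
  assert (Hgcd : Z.gcd r q = 1).
  { unfold r. replace (p - 18 * q) with (p + (-18) * q) by lia.
    rewrite Z.gcd_comm, Z.gcd_add_mult_diag_r, Z.gcd_comm. exact Hpq. }
  destruct Hx as [[Hk Hc]|[Ha Hc]].
  -
    apply Fin; [|exact Hk].
    assert (Kr : act x (zpow mul inv one k r) = x) by exact (act_fix_zpow HG Hact _ _ Hk r).
    assert (Kq : act x (zpow mul inv one k (- q)) = x) by exact (act_fix_zpow HG Hact _ _ Hk (- q)).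
    assert (R : act (act (act (act (act x (mul a a)) (zpow mul inv one k r)) (mul a (mul a a)))
                  (zpow mul inv one k r)) (mul a a) = x).
    { pose proof (Hbb x) as E. rewrite !Hb, Kq in E. rewrite <- !AM.
      transitivity (act (act x (inv a)) a); [rewrite <- E; reflexivity|].
      rewrite AM, (grp_mulVg _ _ _ _ HG). apply A1. }
    assert (gen : forall le', IsPartialOrder P le' -> IsOrderRightAction G mul one P le' act ->
               le' x (act x a) -> act x a = x).
    { intros le' HP' Hact' L.
      pose proof (act_le _ _ _ _ _ _ Hact' _ _ a L) as L2.
      pose proof (act_le _ _ _ _ _ _ Hact' _ _ a L2) as L3.
      assert (L2' : le' x (act x (mul a a))) by (rewrite <- AM; exact (po_trans _ _ HP' _ _ _ L L2)).
      assert (L3' : le' x (act x (mul a (mul a a)))) by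
        (rewrite <- !AM; exact (po_trans _ _ HP' _ _ _ (po_trans _ _ HP' _ _ _ L L2) L3)).
      destruct (act_core HG HP' Hact' x _ _ _ _ _ Kr Kr L2' L3' L2' R) as [E _].
      rewrite <- AM in E. apply (po_antisym _ _ HP'); [|exact L].
      rewrite E in L2. exact L2. }
    destruct Hc as [L|L].
    + exact (gen le HP Hact L).
    + exact (gen _ (flip_po le HP) (flip_act Hact) L).
  -
    apply Fin; [exact Ha|].
    assert (Ai : act x (inv a) = x) by exact (act_fix_inv HG Hact _ _ Ha).
    assert (Ri : act (act (act (act (act x (zpow mul inv one k r)) (mul a (mul a a))) (zpow mul inv one k r))
                   (mul a a)) (zpow mul inv one k q) = x).
    { pose proof (Hbb x) as E. rewrite !Hb, !Ha in E. rewrite <- !AM.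
      transitivity (act (act (act (act x (zpow mul inv one k (- q))) (inv a)) a) (zpow mul inv one k q));
        [rewrite <- E; reflexivity|].
      rewrite Hia. apply Hqq. }
    assert (Rii : act (act (act (act (act x (zpow mul inv one k r)) (mul a (mul a a))) (zpow mul inv one k (- q)))
                   (mul (inv a) (inv a))) (zpow mul inv one k (- q)) = x).
    { pose proof (Hrel' x) as E. rewrite !Hbb, !Hb, !Ha in E. rewrite <- !AM.
      apply (act_cancel HG Hact _ _ (inv a)). rewrite E. symmetry. exact Ai. }
    destruct Hc as [L|L].
    + destruct (case2 HG HP Hact x a k r q Ha L Ri Rii) as [E1 E2].
      exact (act_fix_bezout HG Hact x k r q Hgcd E1 E2).
    + destruct (case2 HG (flip_po le HP) (flip_act Hact) x a k r q Ha L Ri Rii) as [E1 E2].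
      exact (act_fix_bezout HG Hact x k r q Hgcd E1 E2).
Qed.
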